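(* Let $k\ge1$ and $n$ be integers and let $a\to b$ be an edge of $G(n,k)$. Then its length $(b-a)_{k+1}$ equals $(n_k-n_{k+1}+2)_{k+1}$ if $b\le n_k-1$, and equals $(n_k-n_{k+1}+1)_{k+1}$ if $b\ge n_k$.
   Context: For an integer $\ell$, $\ell_k$ and $\ell_{k+1}$ (also written $(\ell)_k,(\ell)_{k+1}$) denote the least nonnegative residues of $\ell$ modulo $k$ and $k+1$. $G(n,k)$ is the directed graph on vertices $0,1,\dots,k$ whose edges are exactly the $k$ edges $(i+n-2)_{k+1}\to(i+n-1)_k$, $1\le i\le k$. *)

(* Defs.v *)
From Stdlib Require Import ZArith.
Open Scope Z_scope.

(* least nonnegative residue of l modulo m (for m >= 1); Z.modulo gives exactly this *)
Definition res (l m : Z) : Z := l mod m.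

Definition is_edge (n k a b : Z) : Prop :=
  exists i : Z, 1 <= i <= k /\ a = res (i + n - 2) (k + 1) /\ b = res (i + n - 1) k.

(* Main.v *)
Require Import Defs.
From Stdlib Require Import ZArith Lia.
Open Scope Z_scope.

Theorem lemma7p4 (k n a b : Z) (hk : 1 <= k) (he : is_edge n k a b) :
  (b <= res n k - 1 -> res (b - a) (k + 1) = res (res n k - res n (k + 1) + 2) (k + 1)) /\
  (res n k <= b -> res (b - a) (k + 1) = res (res n k - res n (k + 1) + 1) (k + 1)).
Proof.
  destruct he as [i [Hi [Ha Hb]]]. unfold res in *.
  set (m := i + n - 1) in *.
  assert (Hk0 : k <> 0) by lia. assert (Hk1 : k + 1 <> 0) by lia.
  pose proof (Z.div_mod n k Hk0) as En. pose proof (Z.mod_pos_bound n k ltac:(lia)) as Bn.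
  pose proof (Z.div_mod n (k+1) Hk1) as Es. pose proof (Z.mod_pos_bound n (k+1) ltac:(lia)) as Bs.
  pose proof (Z.div_mod m k Hk0) as Em. pose proof (Z.mod_pos_bound m k ltac:(lia)) as Bm.
  replace (i + n - 2) with (m - 1) in Ha by (unfold m; lia).
  pose proof (Z.div_mod (m-1) (k+1) Hk1) as Ea.
  set (q := n / k) in *. set (r := n mod k) in *.
  set (p := n / (k+1)) in *. set (s := n mod (k+1)) in *.
  set (u := m / k) in *. set (t := (m - 1) / (k+1)) in *.
  rewrite <- Hb in Em, Bm. rewrite <- Ha in Ea.
  assert (Hd : k * (u - q) = r + (i - 1) - b) by (unfold m in Em; lia).
  assert (Hd0 : 0 <= u - q) by nia.
  assert (Hd1 : u - q <= 1) by nia.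
  split; intro H.
  - assert (u = q + 1) by (destruct (Z.eq_dec (u - q) 0); nia).
    replace (b - a) with ((r - s + 2) + (t - p - 1) * (k+1)) by nia.
    apply Z_mod_plus_full.
  - assert (u = q) by (destruct (Z.eq_dec (u - q) 0); nia).
    replace (b - a) with ((r - s + 1) + (t - p) * (k+1)) by nia.
    apply Z_mod_plus_full.
Qed.
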